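(* Fix an iteration $t\ge 1$ of importance-sampling-based BoostTransformer, with current aggregated predictor $f_{t-1}$, and let $f^*$ be a minimizer of the risk $\mathcal{R}$. For a probability distribution $P_t=(P_t^1,\dots,P_t^n)$ on $\{1,\dots,n\}$ with all $P_t^i>0$, let the multiset $\mathcal{I}^t=\{i_1,\dots,i_m\}$ ($m\ge 1$) be drawn by sampling $m$ indices independently according to $P_t$, define the importance-weighted functional gradient estimate $$\bar g_t^{\mathcal{I}^t}=\frac{1}{m}\sum_{k=1}^{m}\frac{1}{n\,P_t^{i_k}}\,g_t^{i_k},$$ the update $f_t=f_{t-1}+\alpha_t\,\bar g_t^{\mathcal{I}^t}$ with a fixed step $\alpha_t\in\mathbb{R}$ (not depending on $P_t$), and the expected training progress $$\mathbb{E}_{P_t}\big[\Delta^{(t)}\big]=\|f_{t-1}-f^*\|^2-\mathbb{E}_{P_t}\big[\|f_t-f^*\|^2\,\big|\,\mathcal{F}^{t-1}\big].$$ Then the distribution $$P_t^i=\frac{\|w(x_i,z_i)\|}{\sum_{j=1}^{n}\|w(x_j,z_j)\|},\qquad i=1,\dots,n,$$ maximizes $\mathbb{E}_{P_t}[\Delta^{(t)}]$ over all such distributions $P_t$; that is, the optimal probability of selecting sample $i$ is proportional to the norm of its boosting weight vector.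
   Context: Multiclass boosting setting: training set $\mathcal{D}=\{(x_1,z_1),\dots,(x_n,z_n)\}$ with labels $z_i\in\{1,\dots,M\}$; predictors $f:\mathcal{X}\to\mathbb{R}^M$ with components $f_k$. The loss is $L(z,f(x))=\sum_{j\ne z}e^{\frac12[f_z(x)-f_j(x)]}$ and the risk is $\mathcal{R}[f]=\frac{1}{n}\sum_{i=1}^n L(z_i,f(x_i))$. The boosting weight vector $w(x,z)\in\mathbb{R}^M$ at the current predictor $f=f_{t-1}$ is $w_k(x,z)=-e^{-\frac12[f_z(x)-f_k(x)]}$ for $k\ne z$ and $w_z(x,z)=\sum_{j\ne z}e^{-\frac12[f_z(x)-f_j(x)]}$. Predictors and functional gradients are regarded as elements of a real inner product space with norm $\|\cdot\|$. For each sample $i$, $g_t^i$ denotes the functional (directional) gradient of the $i$-th loss term $L(z_i,\cdot)$ at $f_{t-1}$, and the full functional gradient is $g_t=\frac1n\sum_{i=1}^n g_t^i$; as in the paper, the per-sample gradient is identified with the boosting weight up to a common positive scale, so $\|g_t^i\|=\beta\,\|w(x_i,z_i)\|$ for a fixed $\beta>0$. The importance-weighted estimate is unbiased: $\mathbb{E}_{P_t}[\bar g_t^{\mathcal{I}^t}]=g_t$. $\mathcal{F}^{t-1}$ denotes the history of the algorithm up to iteration $t-1$ (so $f_{t-1}$, the $w(x_i,z_i)$ and the $g_t^i$ are fixed given $\mathcal{F}^{t-1}$). *)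

(* Defs.v *)
From HB Require Import structures.
From mathcomp Require Import all_boot all_order all_algebra.
From mathcomp Require Import all_classical all_reals.
From mathcomp Require Import sequences exp.
Set Implicit Arguments. Unset Strict Implicit. Unset Printing Implicit Defensive.
Import Order.TTheory GRing.Theory Num.Theory.
Local Open Scope ring_scope.

Section Boost.
Variable R : realType.

(* A predictor evaluated at a point x is a score vector fx : 'I_M -> R. *)

Definition loss (M : nat) (z : 'I_M) (fx : 'I_M -> R) : R :=
  \sum_(j < M | j != z) expR ((fx z - fx j) / 2).

Definition risk (X : Type) (n M : nat) (xs : 'I_n -> X) (zs : 'I_n -> 'I_M)
    (f : X -> 'I_M -> R) : R :=
  n%:R^-1 * \sum_(i < n) loss (zs i) (f (xs i)).

Definition bweight (M : nat) (fx : 'I_M -> R) (z : 'I_M) (k : 'I_M) : R :=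
  if k == z then \sum_(j < M | j != z) expR (- ((fx z - fx j) / 2))
  else - expR (- ((fx z - fx k) / 2)).

Definition enorm (M : nat) (v : 'I_M -> R) : R :=
  Num.sqrt (\sum_(k < M) v k ^+ 2).

Definition is_inner_product (V : lmodType R) (ip : V -> V -> R) : Prop :=
  [/\ (forall u v, ip u v = ip v u),
      (forall (a : R) u v w, ip (a *: u + v) w = a * ip u w + ip v w),
      (forall v, 0 <= ip v v) &
      (forall v, ip v v = 0 -> v = 0)].

Definition ipnorm (V : lmodType R) (ip : V -> V -> R) (v : V) : R :=
  Num.sqrt (ip v v).

Definition pos_distr (n : nat) (P : 'I_n -> R) : Prop :=
  (forall i, 0 < P i) /\ \sum_(i < n) P i = 1.

(* Expectation over m indices drawn i.i.d. from P: a sample is a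
   function s : 'I_m -> 'I_n (s k = i_k), of probability \prod_k P (s k). *)
Definition iid_expect (n m : nat) (P : 'I_n -> R)
    (F : {ffun 'I_m -> 'I_n} -> R) : R :=
  \sum_(s : {ffun 'I_m -> 'I_n}) (\prod_(k < m) P (s k)) * F s.

Definition gbar (V : lmodType R) (n m : nat) (P : 'I_n -> R) (g : 'I_n -> V)
    (s : {ffun 'I_m -> 'I_n}) : V :=
  m%:R^-1 *: \sum_(k < m) ((n%:R * P (s k))^-1 *: g (s k)).

Definition exp_progress (V : lmodType R) (ip : V -> V -> R) (n m : nat)
    (P : 'I_n -> R) (g : 'I_n -> V) (alpha : R) (fprev fstar : V) : R :=
  ipnorm ip (fprev - fstar) ^+ 2 -
  @iid_expect n m P (fun s => ipnorm ip (fprev + alpha *: @gbar V n m P g s - fstar) ^+ 2).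

End Boost.

(* Main.v *)
Require Import Defs.
From HB Require Import structures.
From mathcomp Require Import all_boot all_order all_algebra.
From mathcomp Require Import all_classical all_reals.
From mathcomp Require Import sequences exp.
From mathcomp Require Import ring lra.
Import Order.TTheory GRing.Theory Num.Theory.
Set Implicit Arguments. Unset Strict Implicit. Unset Printing Implicit Defensive.
Local Open Scope ring_scope.

Section Aux.
Variable R : realType.

Lemma E_prod n m (P : 'I_n -> R) (G : 'I_m -> 'I_n -> R) :
  iid_expect P (fun s : {ffun 'I_m -> 'I_n} => \prod_k G k (s k)) =
  \prod_(k < m) \sum_(j < n) P j * G k j.
Proof.
rewrite /iid_expect bigA_distr_bigA /=; apply: eq_bigr => s _.
by rewrite -big_split.
Qed.

Lemma E_add n m (P : 'I_n -> R) (F1 F2 : {ffun 'I_m -> 'I_n} -> R) :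
  iid_expect P (fun s => F1 s + F2 s) = iid_expect P F1 + iid_expect P F2.
Proof. by rewrite /iid_expect -big_split; apply: eq_bigr => s _; rewrite mulrDr. Qed.

Lemma E_scale n m (P : 'I_n -> R) (c : R) (F : {ffun 'I_m -> 'I_n} -> R) :
  iid_expect P (fun s => c * F s) = c * iid_expect P F.
Proof. by rewrite /iid_expect mulr_sumr; apply: eq_bigr => s _; rewrite mulrCA. Qed.

Lemma E_sum n m (P : 'I_n -> R) (I : Type) (r : seq I) (F : I -> {ffun 'I_m -> 'I_n} -> R) :
  iid_expect P (fun s => \sum_(i <- r) F i s) = \sum_(i <- r) iid_expect P (F i).
Proof.
rewrite /iid_expect exchange_big /=; apply: eq_bigr => s _.
by rewrite mulr_sumr.
Qed.

Lemma E_ext n m (P : 'I_n -> R) (F1 F2 : {ffun 'I_m -> 'I_n} -> R) :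
  (forall s, F1 s = F2 s) -> iid_expect P F1 = iid_expect P F2.
Proof. by move=> h; rewrite /iid_expect; apply: eq_bigr => s _; rewrite h. Qed.

Lemma sum_ind n (F : 'I_n -> R) i : \sum_(x < n) (x == i)%:R * F x = F i.
Proof.
rewrite (bigD1 i) //= eqxx mul1r big1 ?addr0 // => x /negPf ->.
by rewrite mul0r.
Qed.

Lemma sum_ind' n (F : 'I_n -> R) i : \sum_(x < n) (i == x)%:R * F x = F i.
Proof.
rewrite (bigD1 i) //= eqxx mul1r big1 ?addr0 // => x; rewrite eq_sym => /negPf ->.
by rewrite mul0r.
Qed.

Lemma E_const n m (P : 'I_n -> R) (c : R) : \sum_i P i = 1 ->
  iid_expect P (fun _ : {ffun 'I_m -> 'I_n} => c) = c.
Proof.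
move=> h1.
rewrite (@E_ext _ _ _ _ (fun s => c * \prod_(k < m) (fun _ _ => 1) k (s k))); last first.
  by move=> s; rewrite big1 ?mulr1.
rewrite E_scale (E_prod P (fun _ _ => 1)) big1 ?mulr1 // => k _.
by under eq_bigr => j _ do rewrite mulr1.
Qed.

Lemma E_one n m (P : 'I_n -> R) (k : 'I_m) (F : 'I_n -> R) : \sum_i P i = 1 ->
  iid_expect P (fun s : {ffun 'I_m -> 'I_n} => F (s k)) = \sum_i P i * F i.
Proof.
move=> h1.
rewrite (@E_ext _ _ _ _ (fun s => \prod_k0 (fun k' j => if k' == k then F j else 1) k0 (s k0))); last first.
  by move=> s; rewrite (bigD1 k) //= eqxx big1 ?mulr1 // => k' /negPf ->.
rewrite (E_prod P (fun k' j => if k' == k then F j else 1)).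
rewrite [LHS](bigD1 k) //= eqxx [X in _ * X]big1 ?mulr1 // => k' /negPf ->.
by under eq_bigr => j _ do rewrite mulr1.
Qed.

Lemma E_two n m (P : 'I_n -> R) (k l : 'I_m) (F1 F2 : 'I_n -> R) : \sum_i P i = 1 ->
  k != l ->
  iid_expect P (fun s : {ffun 'I_m -> 'I_n} => F1 (s k) * F2 (s l)) =
  (\sum_i P i * F1 i) * (\sum_i P i * F2 i).
Proof.
move=> h1 kl.
pose G := fun k' j => if k' == k then F1 j else if k' == l then F2 j else 1.
rewrite (@E_ext _ _ _ _ (fun s => \prod_k0 G k0 (s k0))); last first.
  move=> s; rewrite /G (bigD1 k) //= eqxx (bigD1 l) 1?eq_sym //= eqxx ?(eq_sym l k) (negPf kl).
  by rewrite big1 ?mulr1 // => k' /andP[/negPf -> /negPf ->].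
rewrite (E_prod P G) /G.
rewrite [LHS](bigD1 k) //= eqxx [X in _ * X](bigD1 l) 1?eq_sym //= eqxx ?(eq_sym l k) (negPf kl).
rewrite [X in _ * (_ * X)]big1 ?mulr1 // => k' /andP[/negPf -> /negPf ->].
by under eq_bigr => j _ do rewrite mulr1.
Qed.

Lemma E_pair n m (P : 'I_n -> R) (k l : 'I_m) (H : 'I_n -> 'I_n -> R) : \sum_i P i = 1 ->
  k != l ->
  iid_expect P (fun s : {ffun 'I_m -> 'I_n} => H (s k) (s l)) =
  \sum_i \sum_j P i * P j * H i j.
Proof.
move=> h1 kl.
rewrite (@E_ext _ _ _ _ (fun s => \sum_i \sum_j ((s k == i)%:R * (s l == j)%:R) * H i j)); last first.
  move=> s; under eq_bigr => i _ do under eq_bigr => j _ do rewrite -mulrA.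
  under eq_bigr => i _ do rewrite -mulr_sumr.
  by rewrite sum_ind' sum_ind'.
rewrite E_sum; apply: eq_bigr => i _; rewrite E_sum; apply: eq_bigr => j _.
rewrite (@E_ext _ _ _ _ (fun s => H i j * ((s k == i)%:R * (s l == j)%:R))); last by move=> s; rewrite mulrC.
rewrite E_scale (E_two (fun x => (x == i)%:R) (fun x => (x == j)%:R) h1 kl).
under eq_bigr => x _ do rewrite mulrC.
rewrite sum_ind.
under eq_bigr => x _ do rewrite mulrC.
by rewrite sum_ind mulrC.
Qed.


Section IP.
Variables (V : lmodType R) (ip : V -> V -> R).
Hypothesis Hip : is_inner_product ip.

Lemma ipC u v : ip u v = ip v u. Proof. by case: Hip. Qed.
Lemma ipL a u v w : ip (a *: u + v) w = a * ip u w + ip v w. Proof. by case: Hip. Qed.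
Lemma ip0l w : ip 0 w = 0.
Proof. by have := ipL (-1) w w w; rewrite scaleN1r addNr mulN1r addNr. Qed.
Lemma ipDl u v w : ip (u + v) w = ip u w + ip v w.
Proof. by have := ipL 1 u v w; rewrite scale1r mul1r. Qed.
Lemma ipZl a u w : ip (a *: u) w = a * ip u w.
Proof. by have := ipL a u 0 w; rewrite !addr0 ip0l addr0. Qed.
Lemma ipDr u v w : ip w (u + v) = ip w u + ip w v.
Proof. by rewrite ipC ipDl ipC [ip v w]ipC. Qed.
Lemma ipZr a u w : ip w (a *: u) = a * ip w u.
Proof. by rewrite ipC ipZl ipC. Qed.
Lemma ip_suml I (r : seq I) (F : I -> V) w :
  ip (\sum_(i <- r) F i) w = \sum_(i <- r) ip (F i) w.
Proof. exact: (big_morph (fun v => ip v w) (fun x y => ipDl x y w) (ip0l w)). Qed.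
Lemma ip_sumr I (r : seq I) (F : I -> V) w :
  ip w (\sum_(i <- r) F i) = \sum_(i <- r) ip w (F i).
Proof. rewrite ipC ip_suml; apply: eq_bigr => i _; exact: ipC. Qed.

Lemma ip_expand d c S :
  ip (d + c *: S) (d + c *: S) = ip d d + 2 * c * ip S d + c ^+ 2 * ip S S.
Proof. rewrite !ipDl !ipDr !ipZl !ipZr [ip d S]ipC; ring. Qed.

Lemma E_quad n m (P : 'I_n -> R) (u : 'I_n -> V) d c : \sum_i P i = 1 ->
  iid_expect P (fun s : {ffun 'I_m -> 'I_n} =>
     ip (d + c *: \sum_k u (s k)) (d + c *: \sum_k u (s k))) =
  ip d d + 2 * c * (m%:R * ip (\sum_i P i *: u i) d) +
  c ^+ 2 * (m%:R * m%:R * ip (\sum_i P i *: u i) (\sum_i P i *: u i) +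
            m%:R * (\sum_i P i * ip (u i) (u i) -
                    ip (\sum_i P i *: u i) (\sum_i P i *: u i))).
Proof.
move=> h1.
set W := \sum_i P i *: u i.
set A := \sum_i P i * ip (u i) (u i).
rewrite (@E_ext _ _ _ _ (fun s => ip d d + (2 * c * \sum_k ip (u (s k)) d +
   c ^+ 2 * \sum_k \sum_l ip (u (s k)) (u (s l))))); last first.
  move=> s; rewrite ip_expand addrA ip_suml; congr (_ + _ * _).
  rewrite ip_suml; apply: eq_bigr => k _; exact: ip_sumr.
rewrite !E_add E_const // !E_scale E_sum E_sum.
have e1 : forall k : 'I_m, iid_expect P (fun s : {ffun 'I_m -> 'I_n} => ip (u (s k)) d) = ip W d.
  move=> k; rewrite (E_one k (fun i => ip (u i) d) h1) /W ip_suml.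
  by apply: eq_bigr => i _; rewrite ipZl.
under eq_bigr => k _ do rewrite e1.
have e2 : forall k l : 'I_m, iid_expect P (fun s : {ffun 'I_m -> 'I_n} =>
    \sum_l ip (u (s k)) (u (s l))) = \sum_(l < m) (ip W W + (k == l)%:R * (A - ip W W)).
  move=> k l0; rewrite E_sum; apply: eq_bigr => l _.
  have [<-|kl] := eqVneq k l.
    rewrite mul1r addrC subrK.
    by rewrite (E_one k (fun i => ip (u i) (u i)) h1).
  rewrite mul0r addr0.
  rewrite (E_pair (fun i j => ip (u i) (u j)) h1 kl) /W ip_suml.
  apply: eq_bigr => i _; rewrite ipZl ip_sumr mulr_sumr.
  by apply: eq_bigr => j _; rewrite ipZr mulrA.
rewrite sumr_const card_ord (eq_bigr (fun k : 'I_m => \sum_(l < m) (ip W W + (k == l)%:R * (A - ip W W)))); last first.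
  by move=> k _; exact: (e2 k k).
rewrite (eq_bigr (fun _ => ip W W *+ m + (A - ip W W))); last first.
  by move=> k _; rewrite big_split /= sum_ind' sumr_const card_ord.
rewrite sumr_const card_ord -[ip W d *+ m]mulr_natl -[ip W W *+ m]mulr_natl.
rewrite -[(_ + _) *+ m]mulr_natl.
ring.
Qed.

End IP.
End Aux.

Lemma enorm_pos (R : realType) (M : nat) (fx : 'I_M -> R) (z : 'I_M) :
  (1 < M)%N -> 0 < enorm (bweight fx z).
Proof.
move=> M1.
have [j0 hj0] : exists j0 : 'I_M, j0 != z.
  have M0 : (0 < M)%N by apply: ltn_trans M1.
  case: (eqVneq z (Ordinal M1)) => [->|h]; last by exists (Ordinal M1); rewrite eq_sym.
  by exists (Ordinal M0).
have bz : 0 < bweight fx z z.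
  rewrite /bweight eqxx (bigD1 j0) //=.
  have := expR_gt0 (- ((fx z - fx j0) / 2)).
  have : 0 <= \sum_(i < M | (i != z) && (i != j0)) expR (- ((fx z - fx i) / 2)).
    by apply: sumr_ge0 => i _; apply: ltW; apply: expR_gt0.
  lra.
rewrite /enorm sqrtr_gt0 (bigD1 z) //=.
have : 0 <= \sum_(i < M | i != z) bweight fx z i ^+ 2.
  by apply: sumr_ge0 => i _; apply: sqr_ge0.
have : 0 < bweight fx z z ^+ 2 by apply: exprn_gt0.
lra.
Qed.

Lemma prog_formula (R : realType) (V : lmodType R) (ip : V -> V -> R) (n m : nat)
  (P : 'I_n -> R) (g : 'I_n -> V) (alpha : R) (fprev fstar : V) :
  is_inner_product ip -> pos_distr P ->
  let u := fun i => (n%:R * P i)^-1 *: g i in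
  let W := \sum_i P i *: u i in
  let c := alpha / m%:R in
  let d := fprev - fstar in
  exp_progress ip m P g alpha fprev fstar =
  ip d d - (ip d d + 2 * c * (m%:R * ip W d) +
  c ^+ 2 * (m%:R * m%:R * ip W W +
            m%:R * (\sum_i P i * ip (u i) (u i) - ip W W))).
Proof.
move=> Hip [Ppos P1] u W c d.
have ipp : forall v, 0 <= ip v v by case: Hip.
rewrite /exp_progress /ipnorm sqr_sqrtr // -(E_quad Hip m u d c P1).
congr (_ - _); apply: E_ext => s.
rewrite sqr_sqrtr // /gbar scalerA addrAC.
by [].
Qed.

Lemma W_eq (R : realType) (V : lmodType R) (n : nat) (P : 'I_n -> R) (g : 'I_n -> V) :
  (0 < n)%N -> pos_distr P ->
  \sum_i P i *: ((n%:R * P i)^-1 *: g i) = n%:R^-1 *: \sum_i g i.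
Proof.
move=> n0 [Ppos _]; rewrite scaler_sumr; apply: eq_bigr => i _.
rewrite scalerA; congr (_ *: _).
have := Ppos i; have : (0 < n%:R :> R) by rewrite ltr0n.
move=> h1 h2; field; apply/andP; split; apply: lt0r_neq0 => //.
Qed.

Theorem theorem1 (R : realType) (X : Type) (n M m : nat)
  (xs : 'I_n -> X) (zs : 'I_n -> 'I_M)
  (V : lmodType R) (ip : V -> V -> R) (ev : V -> X -> 'I_M -> R)
  (fprev fstar : V) (g : 'I_n -> V) (beta alpha : R) :
  is_inner_product ip ->
  (1 < M)%N -> (0 < n)%N -> (0 < m)%N ->
  (forall h : V, risk xs zs (ev fstar) <= risk xs zs (ev h)) ->
  0 < beta ->
  (forall i, ipnorm ip (g i) = beta * enorm (bweight (ev fprev (xs i)) (zs i))) ->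
  let Pstar := fun i : 'I_n =>
    enorm (bweight (ev fprev (xs i)) (zs i)) /
    \sum_(j < n) enorm (bweight (ev fprev (xs j)) (zs j)) in
  pos_distr Pstar /\
  forall P : 'I_n -> R, pos_distr P ->
    exp_progress ip m P g alpha fprev fstar <=
    exp_progress ip m Pstar g alpha fprev fstar.
Proof.
move=> Hip M1 n0 m0 _ b0 hg Pstar.
pose e := fun i => enorm (bweight (ev fprev (xs i)) (zs i)).
have epos : forall i, 0 < e i by move=> i; apply: enorm_pos.
pose E := \sum_j e j.
have E0 : 0 < E.
  rewrite /E (bigD1 (Ordinal n0)) //=.
  have := epos (Ordinal n0).
  have : 0 <= \sum_(i < n | i != Ordinal n0) e i by apply: sumr_ge0 => i _; apply: ltW.
  lra.
have PsE : forall i, Pstar i = e i / E by [].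
have hPs : pos_distr Pstar.
  split; first by move=> i; rewrite PsE divr_gt0.
  under eq_bigr => i _ do rewrite PsE.
  by rewrite -mulr_suml mulfV // gt_eqF.
split => // P hP.
have ipp : forall v, 0 <= ip v v by case: Hip.
have hq : forall i, ip (g i) (g i) = (beta * e i) ^+ 2.
  by move=> i; rewrite -(sqr_sqrtr (ipp (g i))) -hg.
have n0R : (0 < n%:R :> R) by rewrite ltr0n.
have Aeq : forall Q : 'I_n -> R,
   \sum_i Q i * ip ((n%:R * Q i)^-1 *: g i) ((n%:R * Q i)^-1 *: g i) =
   \sum_i Q i * ((n%:R * Q i)^-1 * ((n%:R * Q i)^-1 * (beta * e i) ^+ 2)).
  by move=> Q; apply: eq_bigr => i _; rewrite (ipZl Hip) (ipZr Hip) hq.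
pose k := n%:R^-1 ^+ 2 * beta ^+ 2.
have key : \sum_i Pstar i * ((n%:R * Pstar i)^-1 * ((n%:R * Pstar i)^-1 * (beta * e i) ^+ 2))
        <= \sum_i P i * ((n%:R * P i)^-1 * ((n%:R * P i)^-1 * (beta * e i) ^+ 2)).
  have -> : \sum_i Pstar i * ((n%:R * Pstar i)^-1 * ((n%:R * Pstar i)^-1 * (beta * e i) ^+ 2))
            = \sum_i (k * E) * e i.
    apply: eq_bigr => i _; rewrite PsE /k.
    have := epos i => ei.
    field; rewrite ?gt_eqF //.
  rewrite -mulr_sumr -/E.
  case: hP => Ppos P1.
  have lb : \sum_i (2 * k * E * e i - k * E ^+ 2 * P i) = k * E * E.
    by rewrite sumrB -!mulr_sumr -/E P1; ring.
  rewrite -lb; apply: ler_sum => i _.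
  rewrite -subr_ge0.
  have := Ppos i => pi.
  have -> : P i * ((n%:R * P i)^-1 * ((n%:R * P i)^-1 * (beta * e i) ^+ 2)) -
     (2 * k * E * e i - k * E ^+ 2 * P i) = k / P i * (e i - E * P i) ^+ 2.
    rewrite /k; field; rewrite ?gt_eqF //.
  apply: mulr_ge0; last exact: sqr_ge0.
  by apply: divr_ge0; [rewrite /k; apply: mulr_ge0; apply: sqr_ge0 | apply: ltW].
rewrite (prog_formula _ _ _ _ _ Hip hP) (prog_formula _ _ _ _ _ Hip hPs).
rewrite !W_eq // !Aeq.
set AP := \sum_i P i * _.
set AS := \sum_i Pstar i * _.
rewrite -subr_ge0.
set c := alpha / m%:R.
set d := fprev - fstar.
set W := n%:R^-1 *: _.
have -> : ip d d - (ip d d + 2 * c * (m%:R * ip W d) +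
     c ^+ 2 * (m%:R * m%:R * ip W W + m%:R * (AS - ip W W))) -
    (ip d d - (ip d d + 2 * c * (m%:R * ip W d) +
     c ^+ 2 * (m%:R * m%:R * ip W W + m%:R * (AP - ip W W)))) =
    c ^+ 2 * m%:R * (AP - AS) by ring.
apply: mulr_ge0; first by apply: mulr_ge0; [apply: sqr_ge0 | apply: ler0n].
by rewrite subr_ge0.
Qed.
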